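(* Let $a,b,c,q>0$, $0<p<1$, and consider $$\frac{dx}{dt}=x\left[\frac{(1-x)(x-p)}{1+qy}-ay\right],\qquad \frac{dy}{dt}=by\,(1-y-cx).$$ Define $A_1=ac^2q+1$, $A_2=-(2acq+ac+p+1)$, $A_3=a+aq+p$, $\Delta=A_2^2-4A_1A_3$. When $\Delta>0$ put $x_1=\frac{-A_2-\sqrt\Delta}{2A_1}$, $x_2=\frac{-A_2+\sqrt\Delta}{2A_1}$, $E_{1*}=(x_1,1-cx_1)$, $E_{2*}=(x_2,1-cx_2)$; when $\Delta=0$ put $x_3=-\frac{A_2}{2A_1}$ and $E_{3*}=(x_3,1-cx_3)$. Then the positive equilibria (equilibria with both coordinates positive) of the system are as follows. Case I: $\Delta>0$. (1) If $2A_1+A_2>0$: (a) if $0<c<1$, there are exactly two positive equilibria $E_{1*}$ and $E_{2*}$; (b) if $c=1$, there is exactly one positive equilibrium $E_{1*}$; (c) if $1<c\le \frac1q+1$ and $0<p<\frac1c$, there is exactly one positive equilibrium $E_{1*}$. (2) If $2A_1+A_2<0$, $1<c<\frac1q+1$ and $0<p<\frac1c$, there is exactly one positive equilibrium $E_{1*}$. (3) If $2A_1+A_2=0$, $c>1$ and $0<p<\frac1c$, there is exactly one positive equilibrium $E_{1*}$. Case II: if $\Delta=0$, $2A_1+A_2>0$ and $0<c<1$, there is exactly one positive equilibrium $E_{3*}$.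
   Context: The quadratic $A_1x^2+A_2x+A_3=0$ is obtained by eliminating $y=1-cx$ from the equations $(1-x)(x-p)/(1+qy)-ay=0$ and $1-y-cx=0$; its real roots give the $x$-coordinates of the interior equilibria. *)

(* Defs.v *)
From Stdlib Require Import Reals Lra.
Open Scope R_scope.

Definition fx (a p q x y : R) : R := x * ((1 - x) * (x - p) / (1 + q * y) - a * y).
Definition fy (b c x y : R) : R := b * y * (1 - y - c * x).

Definition pos_equilibrium (a b c p q x y : R) : Prop :=
  0 < x /\ 0 < y /\ fx a p q x y = 0 /\ fy b c x y = 0.

Definition Acoef1 (a c q : R) : R := a * c ^ 2 * q + 1.
Definition Acoef2 (a c p q : R) : R := - (2 * a * c * q + a * c + p + 1).
Definition Acoef3 (a p q : R) : R := a + a * q + p.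
Definition Delta_disc (a c p q : R) : R := (Acoef2 a c p q) ^ 2 - 4 * Acoef1 a c q * Acoef3 a p q.

Definition xstar1 (a c p q : R) : R := (- Acoef2 a c p q - sqrt (Delta_disc a c p q)) / (2 * Acoef1 a c q).
Definition xstar2 (a c p q : R) : R := (- Acoef2 a c p q + sqrt (Delta_disc a c p q)) / (2 * Acoef1 a c q).
Definition xstar3 (a c p q : R) : R := - Acoef2 a c p q / (2 * Acoef1 a c q).

Definition Estar1 (a c p q : R) : R * R := (xstar1 a c p q, 1 - c * xstar1 a c p q).
Definition Estar2 (a c p q : R) : R * R := (xstar2 a c p q, 1 - c * xstar2 a c p q).
Definition Estar3 (a c p q : R) : R * R := (xstar3 a c p q, 1 - c * xstar3 a c p q).

(* Main.v *)
Require Import Defs.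
From Stdlib Require Import Reals Lra Psatz.
Open Scope R_scope.

Lemma key (a b c p q x y : R) : 0<a -> 0<b -> 0<c -> 0<q ->
  pos_equilibrium a b c p q x y <->
  (0<x /\ 0 < 1 - c*x /\ y = 1 - c*x /\
   Acoef1 a c q * x^2 + Acoef2 a c p q * x + Acoef3 a p q = 0).
Proof.
  intros ha hb hc hq; unfold pos_equilibrium, fx, fy, Acoef1, Acoef2, Acoef3; split.
  - intros [hx [hy [h1 h2]]].
    assert (e: 1 - y - c*x = 0).
    { destruct (Rmult_integral _ _ h2) as [h|h]; [|exact h].
      destruct (Rmult_integral _ _ h); lra. }
    assert (e2: (1 - x) * (x - p) / (1 + q * y) - a * y = 0).
    { destruct (Rmult_integral _ _ h1); lra. }
    assert (d: 1 + q*y > 0) by nra.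
    assert (e3: (1 - x) * (x - p) = a*y*(1+q*y)).
    { assert (e4: (1 - x) * (x - p) / (1 + q * y) = a*y) by lra.
      rewrite <- e4; field; lra. }
    assert (y = 1 - c*x) by lra. subst y.
    split; [lra|split;[lra|split;[lra|]]].
    nra.
  - intros [hx [hy [ey hq2]]]. subst y.
    split; [lra|split;[lra|split]].
    + assert (e3: (1 - x) * (x - p) = a*(1-c*x)*(1+q*(1-c*x))) by nra.
      rewrite e3. field. nra.
    + ring.
Qed.

Lemma roots (A1 A2 A3 s x : R) : A1 > 0 -> s >= 0 -> s*s = A2^2 - 4*A1*A3 ->
  (A1*x^2 + A2*x + A3 = 0 <-> x = (-A2 - s)/(2*A1) \/ x = (-A2+s)/(2*A1)).
Proof.
  intros h1 hs hD.
  assert (E: 4*A1*(A1*x^2+A2*x+A3) = (2*A1*x+A2+s)*(2*A1*x+A2-s)) by nra.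
  split.
  - intro h. assert (h': (2*A1*x+A2+s)*(2*A1*x+A2-s) = 0) by nra.
    assert (k1: 2*A1*((-A2-s)/(2*A1)) = -A2-s) by (field; lra).
    assert (k2: 2*A1*((-A2+s)/(2*A1)) = -A2+s) by (field; lra).
    destruct (Rmult_integral _ _ h') as [h3|h3]; [left|right];
      apply (Rmult_eq_reg_l (2*A1)); lra.
  - intros [h|h]; subst x; apply (Rmult_eq_reg_l (4*A1)); try lra;
    rewrite E; field_simplify; try lra; nra.
Qed.

Lemma facts (a b c p q : R) : 0<a -> 0<b -> 0<c -> 0<q -> 0<p ->
  Delta_disc a c p q >= 0 ->
  let s := sqrt (Delta_disc a c p q) in
  let x1 := xstar1 a c p q in let x2 := xstar2 a c p q in
  s >= 0 /\ s*s = Delta_disc a c p q /\ 0 < x1 /\ 0 < x2 /\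
  2*Acoef1 a c q*x1 + Acoef2 a c p q = -s /\ 2*Acoef1 a c q*x2 + Acoef2 a c p q = s /\
  Acoef1 a c q > 0 /\
  Acoef1 a c q * (1-c*x1)*(1-c*x2) = (1-c)*(1-p*c) /\
  (forall x y, pos_equilibrium a b c p q x y <->
     ((x = x1 \/ x = x2) /\ 0 < 1 - c*x /\ y = 1 - c*x)).
Proof.
  intros ha hb hc hq hp hD s x1 x2.
  assert (hs: s >= 0) by (apply Rle_ge, sqrt_pos).
  assert (hss: s*s = Delta_disc a c p q) by (apply sqrt_sqrt; lra).
  assert (hA1: Acoef1 a c q > 0) by (unfold Acoef1; pose proof (pow_lt c 2 hc); assert (0 < a*c^2) by (apply Rmult_lt_0_compat; lra); nra).
  assert (hA3: Acoef3 a p q > 0) by (unfold Acoef3; nra).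
  assert (hA2: Acoef2 a c p q < 0).
  { unfold Acoef2. assert (0 < a*c*q) by (repeat apply Rmult_lt_0_compat; lra). assert (0<a*c) by (apply Rmult_lt_0_compat; lra). lra. }
  pose proof hss as hss0; unfold Delta_disc in hss.
  assert (k1: 2*Acoef1 a c q*x1 = - Acoef2 a c p q - s) by (unfold x1, xstar1, s; field; lra).
  assert (k2: 2*Acoef1 a c q*x2 = - Acoef2 a c p q + s) by (unfold x2, xstar2, s; field; lra).
  assert (hsl: s < - Acoef2 a c p q) by nra.
  assert (hx1: 0 < x1) by nra.
  assert (hx2: 0 < x2) by nra.
  assert (P: 4*Acoef1 a c q * (Acoef1 a c q * (1-c*x1)*(1-c*x2)) = 4*Acoef1 a c q *((1-c)*(1-p*c))).
  { transitivity ((2*Acoef1 a c q - c*(2*Acoef1 a c q*x1))*(2*Acoef1 a c q - c*(2*Acoef1 a c q*x2))).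
    ring. rewrite k1, k2.
    replace ((1-c)*(1-p*c)) with (Acoef1 a c q + c*Acoef2 a c p q + c^2*Acoef3 a p q)
      by (unfold Acoef1, Acoef2, Acoef3; ring).
    nra. }
  split;[lra|]. split;[exact hss0|]. do 5 (split;[lra|]). split.
  - apply (Rmult_eq_reg_l (4*Acoef1 a c q)); [exact P|lra].
  - intros z w; split.
    + intros [hx [hy [ey hq2]]]%key; auto.
      split; [|lra]. exact (proj1 (roots _ _ _ s z hA1 hs hss) hq2).
    + intros [hx [hy ey]]. apply key; auto.
      assert (0 < z) by (destruct hx; subst; lra).
      split; [lra|split;[lra|split;[lra|]]].
      exact (proj2 (roots _ _ _ s z hA1 hs hss) hx).
Qed.

Ltac getf a b c p q ha hb hc hq hp0 hD :=
  let H := fresh in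
  assert (H : Delta_disc a c p q >= 0) by lra;
  destruct (facts a b c p q ha hb hc hq hp0 H) as (hs & hss & hx1 & hx2 & k1 & k2 & hA1 & P & EQ);
  set (s := sqrt (Delta_disc a c p q)) in *;
  set (x1 := xstar1 a c p q) in *; set (x2 := xstar2 a c p q) in *.

Lemma uniq1 (a b c p q : R) :
  let x1 := xstar1 a c p q in let x2 := xstar2 a c p q in
  (forall x y, pos_equilibrium a b c p q x y <->
     ((x = x1 \/ x = x2) /\ 0 < 1 - c*x /\ y = 1 - c*x)) ->
  0 < 1 - c*x1 -> ~ (0 < 1 - c*x2) ->
  forall x y, pos_equilibrium a b c p q x y <-> (x, y) = Estar1 a c p q.
Proof.
  intros x1 x2 EQ h1 h2 x y. rewrite EQ. unfold Estar1. rewrite pair_equal_spec. split.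
  - intros [[e|e] [h ey]]; subst x; [split; auto|].
    exfalso; exact (h2 h).
  - intros [e1 e2]; subst x. split; [left; reflexivity|split; auto].
Qed.

Theorem theorem3p1 (a b c p q : R)
  (ha : 0 < a) (hb : 0 < b) (hc : 0 < c) (hq : 0 < q) (hp0 : 0 < p) (hp1 : p < 1) :
  (* Case I (1)(a) *)
  (Delta_disc a c p q > 0 -> 2 * Acoef1 a c q + Acoef2 a c p q > 0 -> c < 1 ->
     Estar1 a c p q <> Estar2 a c p q /\
     forall x y, pos_equilibrium a b c p q x y <-> ((x, y) = Estar1 a c p q \/ (x, y) = Estar2 a c p q)) /\
  (* Case I (1)(b) *)
  (Delta_disc a c p q > 0 -> 2 * Acoef1 a c q + Acoef2 a c p q > 0 -> c = 1 ->
     forall x y, pos_equilibrium a b c p q x y <-> (x, y) = Estar1 a c p q) /\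
  (* Case I (1)(c) *)
  (Delta_disc a c p q > 0 -> 2 * Acoef1 a c q + Acoef2 a c p q > 0 ->
     1 < c -> c <= 1 / q + 1 -> p < 1 / c ->
     forall x y, pos_equilibrium a b c p q x y <-> (x, y) = Estar1 a c p q) /\
  (* Case I (2) *)
  (Delta_disc a c p q > 0 -> 2 * Acoef1 a c q + Acoef2 a c p q < 0 ->
     1 < c -> c < 1 / q + 1 -> p < 1 / c ->
     forall x y, pos_equilibrium a b c p q x y <-> (x, y) = Estar1 a c p q) /\
  (* Case I (3) *)
  (Delta_disc a c p q > 0 -> 2 * Acoef1 a c q + Acoef2 a c p q = 0 ->
     1 < c -> p < 1 / c ->
     forall x y, pos_equilibrium a b c p q x y <-> (x, y) = Estar1 a c p q) /\
  (* Case II *)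
  (Delta_disc a c p q = 0 -> 2 * Acoef1 a c q + Acoef2 a c p q > 0 -> c < 1 ->
     forall x y, pos_equilibrium a b c p q x y <-> (x, y) = Estar3 a c p q).
Proof.
  assert (big: Delta_disc a c p q > 0 -> 1 < c -> p < 1/c ->
     forall x y, pos_equilibrium a b c p q x y <-> (x, y) = Estar1 a c p q).
  { intros hD hc1 hpc.
    assert (pc: p*c < 1).
    { replace 1 with (1/c*c) by (field; lra). apply Rmult_lt_compat_r; lra. }
    getf a b c p q ha hb hc hq hp0 hD.
    assert (sp: 0 < s) by (unfold s; apply sqrt_lt_R0; lra).
    assert (lt12: x1 < x2) by nra.
    assert (neg: (1-c)*(1-p*c) < 0) by nra.
    assert (gt: 1-c*x1 > 1-c*x2) by nra.
    apply uniq1; [exact EQ| |].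
    + change (0 < 1 - c*x1). destruct (Rlt_or_le 0 (1-c*x1)) as [h|h]; auto. exfalso.
      assert (0 <= (1-c*x1)*(1-c*x2)) by nra.
      assert (0 <= Acoef1 a c q * ((1-c*x1)*(1-c*x2))) by (apply Rmult_le_pos; lra).
      rewrite <- Rmult_assoc in *. lra.
    + intro h. change (0 < 1 - c*x2) in h.
      assert (0 < Acoef1 a c q * (1-c*x1)*(1-c*x2)) by
        (apply Rmult_lt_0_compat; [apply Rmult_lt_0_compat|]; lra).
      lra. }
  split; [|split; [|split; [|split; [|split]]]].
  - intros hD hv hc1.
    getf a b c p q ha hb hc hq hp0 hD.
    assert (sp: 0 < s) by (unfold s; apply sqrt_lt_R0; lra).
    assert (lt12: x1 < x2) by nra.
    assert (lt1: x1 < 1) by nra.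
    assert (h1: 0 < 1 - c*x1) by nra.
    assert (pos: (1-c)*(1-p*c) > 0) by (apply Rmult_lt_0_compat; nra).
    assert (h2: 0 < 1 - c*x2).
    { destruct (Rlt_or_le 0 (1-c*x2)) as [h|h]; auto. exfalso.
      assert (0 < Acoef1 a c q * (1-c*x1)) by (apply Rmult_lt_0_compat; lra).
      assert (Acoef1 a c q * (1-c*x1) * (1-c*x2) <= 0) by nra. lra. }
    split.
    + unfold Estar1, Estar2; fold x1 x2. intro e. apply pair_equal_spec in e. lra.
    + intros x y. rewrite EQ. unfold Estar1, Estar2; fold x1 x2.
      rewrite !pair_equal_spec. split.
      * intros [[e|e] [h ey]]; subst x; [left|right]; auto.
      * intros [[e1 e2]|[e1 e2]]; subst x; split; auto.
  - intros hD hv hc1. subst c.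
    getf a b 1 p q ha hb hc hq hp0 hD.
    assert (lt1: x1 < 1) by nra.
    assert (z: Acoef1 a 1 q * (1 - 1 * x1) * (1 - 1 * x2) = 0) by (rewrite P; ring).
    assert (nz: Acoef1 a 1 q * (1 - 1 * x1) <> 0).
    { apply Rmult_integral_contrapositive_currified; lra. }
    assert (e2: 1 - 1*x2 = 0).
    { destruct (Rmult_integral _ _ z); [contradiction|assumption]. }
    apply uniq1; [exact EQ| |].
    + change (0 < 1 - 1*x1). lra.
    + change (~ 0 < 1 - 1*x2). lra.
  - intros hD hv hc1 _ hpc. apply big; auto.
  - intros hD hv hc1 _ hpc. apply big; auto.
  - intros hD hv hc1 hpc. apply big; auto.
  - intros hD hv hc1.
    getf a b c p q ha hb hc hq hp0 hD.
    assert (s0: s = 0) by (unfold s; rewrite hD; apply sqrt_0).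
    assert (e3: xstar3 a c p q = x1).
    { unfold x1, xstar1, xstar3. fold s. rewrite s0. field. lra. }
    assert (e12: x2 = x1) by (apply (Rmult_eq_reg_l (2*Acoef1 a c q)); lra).
    assert (lt1: x1 < 1) by nra.
    assert (h1: 0 < 1 - c*x1) by nra.
    intros x y. rewrite EQ. unfold Estar3. rewrite e3, pair_equal_spec. split.
    + intros [[e|e] [h ey]]; subst x; auto. rewrite <- e12; auto.
    + intros [e1 e2]; subst x; split; auto.
Qed.
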